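(* Let $S'$ be a finite set of polynomials in $\mathbb{Q}[\alpha_1,\dots,\alpha_r]$, let $c\in\mathbb{Q}$ be a constant, and let $S=S'\cup\{c\}$. Then $S$ is compatibility graph reducible if and only if $S'$ is compatibility graph reducible.
   Context: A polynomial is called linear in a variable $x$ if its degree in $x$ is at most one (it may be constant in $x$). One reduction step. Let $T=\{f_1,\dots,f_m\}$ be a finite set of polynomials with rational coefficients, together with a graph $C$ on vertex set $T$ (its compatibility graph), and let $x$ be a variable. If some $f_i$ is not linear in $x$, the step is undefined. Otherwise write $f_i=g_ix+h_i$ with $g_i=\partial f_i/\partial x$ and $h_i=f_i|_{x=0}$. Let $S^1=\{g_i\}$, $S^2=\{h_i\}$, $S^3=\{g_ih_j-h_ig_j : i\neq j,\ f_if_j\in E(C)\}$, and let $T_{(x)}$ be the set of irreducible factors over $\mathbb{Q}$ of the polynomials in $S^1\cup S^2\cup S^3$. Each $q\in T_{(x)}$ receives a set of labels (2-element sets): the label $\{0,i\}$ if $q$ is an irreducible factor of $g_i$; the label $\{i,\infty\}$ if $q$ is an irreducible factor of $h_i$, and additionally the label $\{0,i\}$ if moreover $h_i=f_i$; the label $\{i,j\}$ if $q$ is an irreducible factor of $g_ih_j-h_ig_j\in S^3$. The new compatibility graph $C_{(x)}$ on vertex set $T_{(x)}$ has $qq'$ as an edge iff some label of $q$ and some label of $q'$ have nonempty intersection. Full reduction. Let $S\subseteq\mathbb{Q}[\alpha_1,\dots,\alpha_r]$ be finite and $\sigma$ a permutation of the variables; write $\sigma(i)$ for the $i$-th variable in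 the order. Let $(S_{[\sigma(1)]},C_{[\sigma(1)]})$ be the result of one reduction step with variable $\sigma(1)$ applied to $S$ with the complete graph as compatibility graph. For $k\ge 2$ define inductively $S_{[\sigma(1),\dots,\sigma(k)]}=\bigcap_{1\le i\le k} S_{[\sigma(1),\dots,\widehat{\sigma(i)},\dots,\sigma(k)](\sigma(i))}$, where the subscript $(\sigma(i))$ means one reduction step with variable $\sigma(i)$ applied to the set $S_{[\sigma(1),\dots,\widehat{\sigma(i)},\dots,\sigma(k)]}$ with its compatibility graph; in these intersections polynomials differing by a nonzero constant factor are identified. The compatibility graph $C_{[\sigma(1),\dots,\sigma(k)]}$ has $fg$ as an edge iff $fg$ is an edge of every $C_{[\sigma(1),\dots,\widehat{\sigma(i)},\dots,\sigma(k)](\sigma(i))}$. $S$ is compatibility graph reducible with respect to $\sigma$ if for all $1\le i\le r-1$ the set $S_{[\sigma(1),\dots,\sigma(i)]}$ is defined and all its polynomials are linear in $\sigma(i+1)$. $S$ is compatibility graph reducible if it is so with respect to some permutation $\sigma$. *)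

(* Defs.v *)
From HB Require Import structures.
From mathcomp Require Import all_boot all_order all_algebra all_fingroup.
From mathcomp Require Import finmap.
From mathcomp Require Import mpoly.
Set Implicit Arguments. Unset Strict Implicit. Unset Printing Implicit Defensive.
Import GRing.Theory.
Local Open Scope ring_scope.

(* Polynomials in Q[alpha_1, ..., alpha_r]; the variable alpha_(i+1) is 'X_i, i : 'I_r. *)
Notation qpoly r := {mpoly rat[r]}.

Section CGR.
Variable r : nat.
Implicit Types (f g h p q : qpoly r) (x : 'I_r).

Definition is_const p : Prop := exists c : rat, p = c%:MP.

(* irreducibility over Q: p is not constant (so p <> 0 and p not a unit) and
   any factorization has a constant factor *)
Definition irreducible_mp p : Prop :=
  ~ is_const p /\ forall a b : qpoly r, p = a * b -> is_const a \/ is_const b.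

Definition irr_factor q p : Prop :=
  p <> 0 /\ irreducible_mp q /\ exists d : qpoly r, p = q * d.

Definition linear_in x f : Prop := forall m, m \in msupp f -> (m x <= 1)%N.

(* g = df/dx and h = f|_{x=0} *)
Definition gpart x f : qpoly r := f^`M(x).
Definition hpart x f : qpoly r :=
  f \mPo [tuple (if j == x then 0 else 'X_j) | j < r].

(* a set of polynomials with a compatibility graph, together with a Prop
   recording whether it is defined *)
Record red_state := RedState {
  rdef : Prop;
  rset : qpoly r -> Prop;
  redge : qpoly r -> qpoly r -> Prop }.

(* the elements of labels: 0, infinity, or an index (an element of T) *)
Inductive point := PZero | PInf | PIdx of qpoly r.

(* (a, b) stands for the 2-element label {a, b} of q, for the reduction step
   w.r.t. x applied to (T, C) *)
Definition has_label (A : red_state) x q (a b : point) : Prop :=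
  (exists fi, rset A fi /\ irr_factor q (gpart x fi) /\ a = PZero /\ b = PIdx fi)
  \/ (exists fi, rset A fi /\ irr_factor q (hpart x fi) /\ a = PIdx fi /\ b = PInf)
  \/ (exists fi, rset A fi /\ irr_factor q (hpart x fi) /\ hpart x fi = fi
                 /\ a = PZero /\ b = PIdx fi)
  \/ (exists fi fj, rset A fi /\ rset A fj /\ fi <> fj /\ redge A fi fj /\
        irr_factor q (gpart x fi * hpart x fj - hpart x fi * gpart x fj)
        /\ a = PIdx fi /\ b = PIdx fj).

Definition labels_meet (a b a' b' : point) : Prop :=
  a = a' \/ a = b' \/ b = a' \/ b = b'.

Definition red_step (A : red_state) x : red_state := {|
  rdef := rdef A /\ (forall f, rset A f -> linear_in x f);
  rset := fun q =>
    (exists fi, rset A fi /\ irr_factor q (gpart x fi))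
    \/ (exists fi, rset A fi /\ irr_factor q (hpart x fi))
    \/ (exists fi fj, rset A fi /\ rset A fj /\ fi <> fj /\ redge A fi fj /\
          irr_factor q (gpart x fi * hpart x fj - hpart x fi * gpart x fj));
  redge := fun q q' => exists a b a' b',
    has_label A x q a b /\ has_label A x q' a' b' /\ labels_meet a b a' b' |}.

(* Since all sets
   produced by a reduction step consist of all irreducible factors (closed under
   multiplication by nonzero constants), plain intersection realises
   "intersection up to nonzero constant factors". *)
Definition red_cap (L : seq 'I_r) (F : 'I_r -> red_state) : red_state := {|
  rdef := forall y, y \in L -> rdef (red_step (F y) y);
  rset := fun q => forall y, y \in L -> rset (red_step (F y) y) q;
  redge := fun q q' => forall y, y \in L -> redge (red_step (F y) y) q q' |}.

Definition init_state (S : seq (qpoly r)) : red_state :=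
  {| rdef := True; rset := fun f => f \in S; redge := fun _ _ => True |}.

(* red_full S n L, with n = size L and L = [sigma(1); ...; sigma(k)] duplicate-free,
   is S_[sigma(1),...,sigma(k)] (with its graph and definedness); for k = 1 it is
   the single reduction step applied to S with the complete graph. *)
Fixpoint red_full (S : seq (qpoly r)) (n : nat) (L : seq 'I_r) : red_state :=
  match n with
  | O => init_state S
  | n'.+1 => red_cap L (fun y => red_full S n' (rem y L))
  end.

Definition S_red (S : seq (qpoly r)) (L : seq 'I_r) : red_state :=
  red_full S (size L) L.

(* S is compatibility graph reducible w.r.t. sigma: for all 1 <= i <= r-1 (here
   i : 'I_r with 0 < i), S_[sigma(1),...,sigma(i)] is defined and all of its
   polynomials are linear in sigma(i+1) (0-indexed: sigma i). *)
Definition cg_reducible_wrt (S : seq (qpoly r)) (sigma : {perm 'I_r}) : Prop :=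
  forall i : 'I_r, (0 < i)%N ->
    let L := map sigma [seq j <- enum 'I_r | (nat_of_ord j < nat_of_ord i)%N] in
    rdef (S_red S L) /\ (forall f, rset (S_red S L) f -> linear_in (sigma i) f).

Definition cg_reducible (S : seq (qpoly r)) : Prop :=
  exists sigma : {perm 'I_r}, cg_reducible_wrt S sigma.

End CGR.

(* Main.v *)
Require Import Defs.
From HB Require Import structures.
From mathcomp Require Import all_boot all_order all_algebra all_fingroup.
From mathcomp Require Import finmap.
From mathcomp Require Import mpoly.
From mathcomp Require Import zify.
Set Implicit Arguments. Unset Strict Implicit. Unset Printing Implicit Defensive.
Import GRing.Theory.
Local Open Scope ring_scope.


Lemma aux (a b : nat) : b != 0%N -> a != 0%N -> (a+b).-1 = 1%N -> a == 1%N.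
Proof. case: a => [|[|a]] //; case: b => [|[|b]] //=; rewrite !addnS //. Qed.

Section P.
Variable r : nat.

Lemma lin_const (x : 'I_r) (c : rat) : linear_in x (c%:MP : {mpoly rat[r]}).
Proof.
move=> m; rewrite msuppC; case: (c == 0) => //.
by rewrite inE => /eqP ->; rewrite mnm0E.
Qed.

Lemma g_const (x : 'I_r) (c : rat) : gpart x (c%:MP : {mpoly rat[r]}) = 0.
Proof. exact: mderivC. Qed.

Lemma h_const (x : 'I_r) (c : rat) : hpart x (c%:MP : {mpoly rat[r]}) = c%:MP.
Proof. exact: comp_mpolyC. Qed.

Lemma no_irr_const (q : {mpoly rat[r]}) (c : rat) : ~ irr_factor q c%:MP.
Proof.
case=> nz [[ncq _] [d E]]; apply: ncq.
have c0 : c != 0 by apply/eqP => c0; apply: nz; rewrite c0 mpolyC0.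
have q0 : q != 0 by apply/eqP => q0; apply: nz; rewrite E q0 mul0r.
have d0 : d != 0 by apply/eqP => d0; apply: nz; rewrite E d0 mulr0.
have s1 : msize (c%:MP : {mpoly rat[r]}) = 1%N by apply/eqP/msize_poly1P; exists c.
move: s1; rewrite E msizeM //.
have : msize q != 0%N by rewrite msize_poly_eq0.
have : msize d != 0%N by rewrite msize_poly_eq0.
move=> hd hq hs.
have sq : msize q == 1%N by apply: (aux hd hq hs).
by case/msize_poly1P: sq => k _ ->; exists k.
Qed.

Lemma irr_scale (q g : {mpoly rat[r]}) (k : rat) : irr_factor q (k *: g) -> irr_factor q g.
Proof.
case=> nz [iq [d E]].
have k0 : k != 0 by apply/eqP => k0; apply: nz; rewrite k0 scale0r.
split; first by move=> g0; apply: nz; rewrite g0 scaler0.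
split => //; exists (k^-1 *: d).
by rewrite -scalerAr -E scalerA mulVf // scale1r.
Qed.
End P.

From Stdlib Require Import Classical FunctionalExtensionality PropExtensionality.

Lemma meet_sym (r : nat) (a b a' b' : point r) : labels_meet a b a' b' -> labels_meet a' b' a b.
Proof. rewrite /labels_meet; intuition. Qed.

Section M.
Variable r : nat.
Variable S' : seq {mpoly rat[r]}.
Variable c : rat.
Let T : {mpoly rat[r]} := c%:MP.
Let A := init_state (T :: S').
Let B := init_state S'.

Lemma memTS f : f \in T :: S' -> f <> T -> f \in S'.
Proof. by rewrite inE => /orP[/eqP->//|]. Qed.

Lemma memS f : f \in S' -> f \in T :: S'.
Proof. by move=> h; rewrite inE h orbT. Qed.

Lemma hl_mono x q a b : has_label B x q a b -> has_label A x q a b.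
Proof.
rewrite /has_label /=.
move=> [[fi [h1 [h2 [-> ->]]]] | [[fi [h1 [h2 [-> ->]]]] | [[fi [h1 [h2 [h3 [-> ->]]]]] | [fi [fj [h1 [h2 [h3 [h4 [h5 [-> ->]]]]]]]]]]].
- by left; exists fi; split => //; apply: memS.
- by right; left; exists fi; split => //; apply: memS.
- by right; right; left; exists fi; split => //; apply: memS.
- by right; right; right; exists fi, fj; split; [apply: memS|split; [apply: memS|]].
Qed.

Lemma hl_noT x q a b : has_label A x q a b -> a <> PIdx T -> b <> PIdx T -> has_label B x q a b.
Proof.
rewrite /has_label /=.
move=> [[fi [h1 [h2 [-> ->]]]] | [[fi [h1 [h2 [-> ->]]]] | [[fi [h1 [h2 [h3 [-> ->]]]]] | [fi [fj [h1 [h2 [h3 [h4 [h5 [-> ->]]]]]]]]]]] na nb.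
- left; exists fi; split => //; apply: memTS => // E; apply: nb; by rewrite E.
- right; left; exists fi; split => //; apply: memTS => // E; apply: na; by rewrite E.
- right; right; left; exists fi; split => //; apply: memTS => // E; apply: nb; by rewrite E.
- right; right; right; exists fi, fj; split; [apply: memTS => // E; apply: na; by rewrite E|].
  split; [apply: memTS => // E; apply: nb; by rewrite E|done].
Qed.

Lemma irr0 (q : {mpoly rat[r]}) : ~ irr_factor q 0.
Proof. by case. Qed.

Lemma hl_T x q a b : has_label A x q a b ->
  (a = PIdx T -> has_label B x q (PZero r) b) /\ (b = PIdx T -> has_label B x q (PZero r) a).
Proof.
rewrite /has_label /=.
move=> [[fi [h1 [h2 [-> ->]]]] | [[fi [h1 [h2 [-> ->]]]] | [[fi [h1 [h2 [h3 [-> ->]]]]] | [fi [fj [h1 [h2 [h3 [h4 [h5 [-> ->]]]]]]]]]]].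
- split => // [[E]]; move: h2; rewrite E g_const => /irr0 [].
- split => // [[E]]; move: h2; rewrite E h_const => /no_irr_const [].
- split => // [[E]]; move: h2; rewrite E h_const => /no_irr_const [].
- split => [[E]|[E]].
  + move: h5; rewrite E g_const h_const mul0r sub0r mul_mpolyC -scaleNr => /irr_scale h5.
    left; exists fj; split => //; apply: memTS => // E'; apply: h3; by rewrite E E'.
  + move: h5; rewrite E g_const h_const mulr0 subr0 mulrC mul_mpolyC => /irr_scale h5.
    left; exists fi; split => //; apply: memTS => // E'; apply: h3; by rewrite E E'.
Qed.

Lemma hl_rep x q a b : has_label A x q a b ->
  (has_label B x q a b /\ a <> PIdx T /\ b <> PIdx T) \/
  (exists e, has_label B x q (PZero r) e /\ ((a = PIdx T /\ e = b) \/ (b = PIdx T /\ e = a))).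
Proof.
move=> H; have [H1 H2] := hl_T H.
case: (classic (a = PIdx T)) => ha.
  by right; exists b; split; [apply: H1|left].
case: (classic (b = PIdx T)) => hb.
  by right; exists a; split; [apply: H2|right].
by left; split; [apply: hl_noT|].
Qed.

Lemma meet_aux (a b a' b' e' t : point r) : a <> t -> b <> t ->
  ((a' = t /\ e' = b') \/ (b' = t /\ e' = a')) -> labels_meet a b a' b' ->
  labels_meet a b (PZero r) e'.
Proof.
rewrite /labels_meet => na nb [[-> ->]|[-> ->]] [|[|[|]]] E; subst;
  solve [ exfalso; auto | tauto ].
Qed.

Lemma edge_AB x q q' : redge (red_step A x) q q' -> redge (red_step B x) q q'.
Proof.
move=> [a [b [a' [b' [H1 [H2 Hm]]]]]].
case: (hl_rep H1) => [[B1 [na nb]]|[e [B1 He]]];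
case: (hl_rep H2) => [[B2 [na' nb']]|[e' [B2 He']]].
- by exists a, b, a', b'.
- exists a, b, (PZero r), e'; split => //; split => //.
  exact: (meet_aux na nb He' Hm).
- exists (PZero r), e, a', b'; split => //; split => //.
  apply: meet_sym; apply: (meet_aux na' nb' He); exact: meet_sym.
- by exists (PZero r), e, (PZero r), e'; split => //; split => //; left.
Qed.

Lemma edge_BA x q q' : redge (red_step B x) q q' -> redge (red_step A x) q q'.
Proof.
move=> [a [b [a' [b' [H1 [H2 Hm]]]]]].
by exists a, b, a', b'; split; [apply: hl_mono|split; [apply: hl_mono|]].
Qed.

Lemma set_AB x q : rset (red_step A x) q -> rset (red_step B x) q.
Proof.
rewrite /=.
move=> [[fi [h1 h2]]|[[fi [h1 h2]]|[fi [fj [h1 [h2 [h3 [h4 h5]]]]]]]].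
- have [E|ne] := eqVneq fi T; first by move: h2; rewrite E g_const => /irr0.
  by left; exists fi; split => //; apply: memTS => //; apply/eqP.
- have [E|ne] := eqVneq fi T; first by move: h2; rewrite E h_const => /no_irr_const.
  by right; left; exists fi; split => //; apply: memTS => //; apply/eqP.
- have [E|ne] := eqVneq fi T.
    move: h5; rewrite E g_const h_const mul0r sub0r mul_mpolyC -scaleNr => /irr_scale h5.
    left; exists fj; split => //; apply: memTS => // E'; apply: h3; by rewrite E E'.
  have [E|ne'] := eqVneq fj T.
    move: h5; rewrite E g_const h_const mulr0 subr0 mulrC mul_mpolyC => /irr_scale h5.
    left; exists fi; split => //; apply: memTS => //; exact/eqP.
  right; right; exists fi, fj; split; [apply: memTS => //; exact/eqP|].
  by split; [apply: memTS => //; exact/eqP|].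
Qed.

Lemma set_BA x q : rset (red_step B x) q -> rset (red_step A x) q.
Proof.
rewrite /=.
move=> [[fi [h1 h2]]|[[fi [h1 h2]]|[fi [fj [h1 [h2 [h3 [h4 h5]]]]]]]].
- by left; exists fi; split => //; apply: memS.
- by right; left; exists fi; split => //; apply: memS.
- by right; right; exists fi, fj; split; [apply: memS|split; [apply: memS|]].
Qed.

Lemma base x : red_step A x = red_step B x.
Proof.
rewrite [LHS]/red_step [RHS]/red_step; congr RedState.
- apply: propositional_extensionality; rewrite /=; split => [[_ H]|[_ H]]; split => // f hf.
  + by apply: H; apply: memS.
  + have [E|ne] := eqVneq f T; first by rewrite E; apply: lin_const.
    by apply: H; apply: memTS => //; apply/eqP.
- apply: functional_extensionality => q; apply: propositional_extensionality.
  split; [exact: set_AB|exact: set_BA].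
- apply: functional_extensionality => q; apply: functional_extensionality => q'.
  apply: propositional_extensionality.
  split; [exact: edge_AB|exact: edge_BA].
Qed.

Definition red_cap' (L : seq 'I_r) (G : 'I_r -> red_state r) : red_state r := {|
  rdef := forall y, y \in L -> rdef (G y);
  rset := fun q => forall y, y \in L -> rset (G y) q;
  redge := fun q q' => forall y, y \in L -> redge (G y) q q' |}.

Lemma full_eq n L : red_full (T :: S') n.+1 L = red_full S' n.+1 L.
Proof.
elim: n L => [|n IH] L.
- change (red_cap' L (fun y => red_step A y) = red_cap' L (fun y => red_step B y)).
  have -> : (fun y => red_step A y) = (fun y => red_step B y).
    by apply: functional_extensionality => y; apply: base.
  by [].
- change (red_cap L (fun y => red_full (T :: S') n.+1 (rem y L)) =
          red_cap L (fun y => red_full S' n.+1 (rem y L))).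
  have -> : (fun y => red_full (T :: S') n.+1 (rem y L)) = (fun y => red_full S' n.+1 (rem y L)).
    by apply: functional_extensionality => y; apply: IH.
  by [].
Qed.

Lemma key L z :
  (rdef (S_red (T :: S') L) /\ (forall f, rset (S_red (T :: S') L) f -> linear_in z f)) <->
  (rdef (S_red S' L) /\ (forall f, rset (S_red S' L) f -> linear_in z f)).
Proof.
rewrite /S_red; case: (size L) => [|n]; last by rewrite full_eq.
rewrite /=; split => [[_ H]|[_ H]]; split => // f hf.
- by apply: H; apply: memS.
- have [E|ne] := eqVneq f T; first by rewrite E; apply: lin_const.
  by apply: H; apply: memTS => //; apply/eqP.
Qed.

End M.

Theorem proposition3p5 (r : nat) (S' : seq {mpoly rat[r]}) (c : rat) :
  cg_reducible (c%:MP :: S') <-> cg_reducible S'.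
Proof.
split => [[s H]|[s H]]; exists s => i hi L.
- by apply/(key S' c L (s i)); exact: (H i hi).
- by apply/(key S' c L (s i)); exact: (H i hi).
Qed.
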